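(* Let $n \ge 1$ and $0 \le k < n$ be integers. Then \[ \left| \binom{n}{k+1} G_{k+1} \right| \le 7\,(n/\pi)^{k+1}. \]
   Context: The Bernoulli numbers $B_k$ are defined by $\frac{t}{e^t-1} = \sum_{k\ge 0} \frac{B_k}{k!} t^k$, and the Genocchi numbers by $G_k = 2(1-2^k)B_k$. *)

(* Defs.v *)
From Stdlib Require Import Reals Lra Lia List.
Open Scope R_scope.

(* Bernoulli numbers B_0, ..., B_n (convention B_1 = -1/2, i.e. the one
   given by t/(e^t-1)), computed by the standard recurrence
   sum_{j=0}^{m} C(m+1,j) B_j = 0 for m >= 1, B_0 = 1.
   [bern_list n] is the list [B_0; ...; B_n]. *)
Fixpoint bern_list (n : nat) : list R :=
  match n with
  | O => 1 :: nil
  | S m =>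
      let l := bern_list m in
      l ++ (- (/ INR (m + 2)) *
              sum_f_R0 (fun j => C (m + 2) j * nth j l 0) m) :: nil
  end.

Definition bernoulli (n : nat) : R := nth n (bern_list n) 0.

Definition genocchi (k : nat) : R := 2 * (1 - 2 ^ k) * bernoulli k.

(* Main.v *)
Require Import Defs.
From Stdlib Require Import Reals Lra Lia List.
From Coquelicot Require Import Coquelicot.
From Stdlib Require Import Binomial.
Open Scope R_scope.

Lemma bern_len m : length (bern_list m) = S m.
Proof. induction m; simpl; auto. rewrite length_app, IHm; simpl; lia. Qed.

Lemma bern_prefix j m : (j <= m)%nat -> nth j (bern_list m) 0 = bernoulli j.
Proof.
  intros H; induction H. reflexivity.
  simpl. rewrite app_nth1; auto. rewrite bern_len; lia.
Qed.

Lemma bern_rec m : sum_f_R0 (fun j => C (m + 2) j * bernoulli j) (S m) = 0.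
Proof.
  simpl sum_f_R0 at 1.
  assert (HB: bernoulli (S m) = - (/ INR (m + 2)) *
              sum_f_R0 (fun j => C (m + 2) j * bernoulli j) m).
  { unfold bernoulli at 1. simpl bern_list. rewrite app_nth2; rewrite bern_len; [|lia].
    replace (S m - S m)%nat with 0%nat by lia. simpl. f_equal.
    apply sum_eq. intros i Hi. rewrite bern_prefix; auto. }
  rewrite HB.
  assert (HC: C (m+2) (S m) = INR (m+2)).
  { unfold C. replace (m+2 - S m)%nat with 1%nat by lia.
    replace (m+2)%nat with (S (S m)) by lia. rewrite (fact_simpl (S m)). change (Factorial.fact 1) with 1%nat.
    rewrite !mult_INR. simpl INR. field. apply not_0_INR; pose proof (Factorial.lt_O_fact m); lia. }
  rewrite HC. field. apply not_0_INR; lia.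
Qed.

Lemma bern0 : bernoulli 0 = 1. Proof. reflexivity. Qed.
Lemma bern1 : bernoulli 1 = -1/2.
Proof. unfold bernoulli. simpl. unfold C. simpl. field. Qed.
Lemma bern2 : bernoulli 2 = 1/6.
Proof. unfold bernoulli. simpl. unfold C. simpl. field. Qed.

Definition bp (m : nat) (x : R) : R :=
  sum_f_R0 (fun i => C m i * bernoulli i * x ^ (m - i)) m.

Lemma is_derive_sumf (g dg : nat -> R -> R) N x :
  (forall i, (i <= N)%nat -> is_derive (g i) x (dg i x)) ->
  is_derive (fun y => sum_f_R0 (fun i => g i y) N) x (sum_f_R0 (fun i => dg i x) N).
Proof.
  induction N; intros H; simpl.
  - apply H; lia.
  - apply (is_derive_plus (fun y => sum_f_R0 (fun i => g i y) N) (g (S N))).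
    apply IHN; intros; apply H; lia. apply H; lia.
Qed.

Lemma C_shift p i : (i <= p)%nat -> C (S p) i * INR (S p - i) = INR (S p) * C p i.
Proof.
  intros Hi. unfold C. replace (S p - i)%nat with (S (p - i)) by lia.
  rewrite (fact_simpl p), (fact_simpl (p - i)), !mult_INR.
  field. repeat split; try apply INR_fact_neq_0; apply not_0_INR; lia.
Qed.

Lemma bp_derive m x : is_derive (bp (S m)) x (INR (S m) * bp m x).
Proof.
  unfold bp.
  eapply is_derive_ext; [intros t; reflexivity|].
  assert (E: INR (S m) * sum_f_R0 (fun i => C m i * bernoulli i * x ^ (m - i)) m =
     sum_f_R0 (fun i => C (S m) i * bernoulli i * (INR (S m - i) * x ^ (pred (S m - i)))) (S m)).
  { rewrite tech5. replace (S m - S m)%nat with 0%nat by lia. simpl INR at 2.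
    rewrite Rmult_0_l, Rmult_0_r, Rplus_0_r. rewrite scal_sum. apply sum_eq.
    intros i Hi. replace (pred (S m - i)) with (m - i)%nat by lia.
    change (match i with 0 => S m | S l => (m - l)%nat end) with (S m - i)%nat.
    pose proof (C_shift m i Hi) as H.
    transitivity (bernoulli i * x ^ (m-i) * (INR (S m) * C m i)); [ring|]. rewrite <- H; ring. }
  rewrite E. apply (is_derive_sumf (fun i y => C (S m) i * bernoulli i * y ^ (S m - i))
     (fun i y => C (S m) i * bernoulli i * (INR (S m - i) * y ^ (pred (S m - i))))).
  intros i Hi. apply is_derive_scal.
  eapply is_derive_ext; [intros t; reflexivity|].
  auto_derive; auto. rewrite Rmult_1_l. reflexivity.
Qed.

Lemma C_nn m : C m m = 1.
Proof. unfold C. replace (m - m)%nat with 0%nat by lia. simpl. field.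
  apply INR_fact_neq_0. Qed.

Lemma bp_at0 m : bp m 0 = bernoulli m.
Proof.
  unfold bp. destruct m. simpl. rewrite C_nn. ring.
  rewrite tech5, sum_eq_R0.
  - replace (S m - S m)%nat with 0%nat by lia. rewrite C_nn. simpl. ring.
  - intros i Hi. replace (S m - i)%nat with (S (m - i)) by lia. simpl. ring.
Qed.

Lemma bp_at1 m : bp (S (S m)) 1 = bernoulli (S (S m)).
Proof.
  unfold bp. rewrite tech5. pose proof (bern_rec m) as H.
  replace (m + 2)%nat with (S (S m)) in H by lia.
  rewrite pow1, C_nn.
  transitivity (sum_f_R0 (fun j => C (S (S m)) j * bernoulli j) (S m) + bernoulli (S (S m))).
  f_equal; [apply sum_eq; intros; rewrite pow1; ring | ring]. rewrite H; ring.
Qed.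

Lemma is_derive_eq (f : R -> R) x l l' : is_derive f x l -> l = l' -> is_derive f x l'.
Proof. intros H ->; exact H. Qed.

Lemma MVT_all (f df : R -> R) a b : (forall x, is_derive f x (df x)) ->
  exists c, f b - f a = df c * (b - a).
Proof.
  intros H. destruct (MVT_gen f a b df) as [c [_ Hc]].
  - intros; apply H.
  - intros x _. apply continuity_pt_filterlim. apply (ex_derive_continuous (K:=R_AbsRing) (V:=R_NormedModule) f).
    eexists; apply H.
  - exists c; exact Hc.
Qed.

Lemma bp_0 x : bp 0 x = 1.
Proof. unfold bp. simpl. rewrite C_nn, bern0. ring. Qed.

Definition bsym m x := bp m (1 - x) - (-1) ^ m * bp m x.

Lemma bsym_derive m x : is_derive (bsym (S m)) x (- INR (S m) * bsym m x).
Proof.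
  unfold bsym.
  apply (is_derive_eq (fun x => bp (S m) (1 - x) - (-1) ^ S m * bp (S m) x) x
    (scal (-1) (INR (S m) * bp m (1 - x)) - (-1) ^ S m * (INR (S m) * bp m x))).
  - apply (is_derive_minus (fun x => bp (S m) (1 - x))).
    + apply (is_derive_comp (bp (S m)) (fun x => 1 - x)). apply bp_derive.
      auto_derive; auto; ring.
    + apply is_derive_scal. apply bp_derive.
  - unfold scal; simpl; unfold mult; simpl. ring.
Qed.

Lemma bsym_zero m : forall x, bsym m x = 0.
Proof.
  induction m as [|m IH]; intros x.
  - unfold bsym. rewrite !bp_0. simpl. ring.
  - assert (Hc: forall y, bsym (S m) y = bsym (S m) 0).
    { intros y. destruct (MVT_all (bsym (S m)) (fun x => - INR (S m) * bsym m x) 0 y)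
        as [c Hc]. intros; apply bsym_derive. rewrite IH in Hc. lra. }
    rewrite Hc. destruct (Nat.Even_or_Odd (S m)) as [[q Hq]|[q Hq]].
    + destruct q as [|q]; [lia|]. destruct q as [|q].
      * replace (S m) with 2%nat by lia. unfold bsym.
        rewrite Rminus_0_r, bp_at1, bp_at0. simpl. ring.
      * rewrite Hq. unfold bsym. rewrite pow_1_even, Rminus_0_r.
        replace (2 * S (S q))%nat with (S (S (2 * q + 2))) by lia.
        rewrite bp_at1, bp_at0. ring.
    + (* odd: use the next derivative *)
      destruct (MVT_all (bsym (S (S m))) (fun x => - INR (S (S m)) * bsym (S m) x) 0 1)
        as [c Hc2]. intros; apply bsym_derive.
      rewrite Hc in Hc2.
      assert (E: bsym (S (S m)) 1 = 0 /\ bsym (S (S m)) 0 = 0).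
      { unfold bsym. rewrite Rminus_0_r, Rminus_eq_0.
        replace (S (S m)) with (2 * (q + 1))%nat by lia. rewrite pow_1_even.
        replace (2 * (q + 1))%nat with (S (S (2 * q))) by lia.
        rewrite bp_at1, bp_at0. split; ring. }
      destruct E as [E1 E2]. rewrite E1, E2 in Hc2.
      assert (INR (S (S m)) > 0) by (apply lt_0_INR; lia).
      nra.
Qed.

Lemma bp_half q : bp (2 * q + 1) (1/2) = 0.
Proof.
  pose proof (bsym_zero (2 * q + 1) (1/2)) as H. unfold bsym in H.
  replace (2 * q + 1)%nat with (S (2 * q)) in * by lia. rewrite pow_1_odd in H.
  replace (1 - 1/2) with (1/2) in H by field. lra.
Qed.

Lemma bern_odd q : bernoulli (2 * q + 3) = 0.
Proof.
  pose proof (bsym_zero (2 * q + 3) 0) as H. unfold bsym in H.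
  replace (2 * q + 3)%nat with (S (2 * (q + 1))) in * by lia. rewrite pow_1_odd in H.
  rewrite Rminus_0_r in H.
  replace (S (2 * (q + 1))) with (S (S (2 * q + 1))) in * by lia.
  rewrite bp_at1, bp_at0 in H. lra.
Qed.

Lemma cont_of_der (f : R -> R) x : ex_derive f x -> continuous f x.
Proof. intros H. apply (ex_derive_continuous (K:=R_AbsRing) (V:=R_NormedModule) f). exact H. Qed.

Lemma dir_delta (f df : R -> R) a b d : a < b -> 0 < d ->
  (forall x, is_derive f x (df x)) -> (forall x, ex_derive df x) -> f a = 0 -> f b = 0 ->
  (PI / (b - a + 2 * d)) ^ 2 * RInt (fun x => f x ^ 2) a b <= RInt (fun x => df x ^ 2) a b.
Proof.
  intros Hab Hd Hf Hdf Ha Hb.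
  set (w := PI / (b - a + 2 * d)).
  assert (Hw: 0 < w) by (unfold w; apply Rdiv_lt_0_compat; [apply PI_RGT_0|lra]).
  assert (Hsin: forall x, Rmin a b <= x <= Rmax a b -> sin (w * (x - a + d)) <> 0).
  { intros x Hx. rewrite Rmin_left, Rmax_right in Hx by lra. apply Rgt_not_eq, sin_gt_0.
    apply Rmult_lt_0_compat; lra.
    assert (w * (b - a + 2 * d) = PI) by (unfold w; field; lra). nra. }
  assert (Hfd: forall x, ex_derive f x) by (intros x; eexists; apply Hf).
  assert (HD: forall x, Derive f x = df x) by (intros; apply is_derive_unique, Hf).
  set (phi := fun x => w * cos (w * (x - a + d)) / sin (w * (x - a + d))).
  set (q := fun x => (df x - phi x * f x) ^ 2).
  set (g := fun x => phi x * f x ^ 2).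
  set (dg := fun x => - (w ^ 2 + phi x ^ 2) * f x ^ 2 + 2 * phi x * f x * df x).
  assert (Hg: forall x, Rmin a b <= x <= Rmax a b -> is_derive g x (dg x)).
  { intros x Hx. unfold g, dg, phi. specialize (Hsin x Hx).
    auto_derive. repeat split; auto. rewrite HD. match goal with |- ?A = ?B => change (@eq R A B) end. unfold Rminus. field. unfold Rminus in Hsin. auto. }
  assert (Hdgc: forall x, Rmin a b <= x <= Rmax a b -> continuous dg x).
  { intros x Hx. apply cont_of_der. unfold dg, phi. specialize (Hsin x Hx).
    auto_derive. repeat split; auto. }
  assert (Hqc: forall x, Rmin a b <= x <= Rmax a b -> continuous q x).
  { intros x Hx. apply cont_of_der. unfold q, phi. specialize (Hsin x Hx).
    auto_derive. repeat split; auto. }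
  assert (I1: is_RInt dg a b 0).
  { replace (0:R) with (g b - g a). apply (is_RInt_derive g dg a b Hg Hdgc).
    unfold g. rewrite Ha, Hb. ring. }
  assert (Eq: ex_RInt q a b) by (apply (ex_RInt_continuous (V:=R_CompleteNormedModule)); exact Hqc).
  assert (I2 := is_RInt_plus _ _ a b _ _ (RInt_correct _ _ _ Eq) I1).
  assert (I3: is_RInt (fun x => df x ^ 2 - w ^ 2 * f x ^ 2) a b (plus (RInt q a b) 0)).
  { apply (is_RInt_ext (fun y => plus (q y) (dg y))); [|exact I2].
    intros x Hx. assert (Hx': Rmin a b <= x <= Rmax a b) by lra.
    specialize (Hsin x Hx'). unfold q, dg, phi, plus; simpl. field. auto. }
  assert (Ef: ex_RInt (fun x => f x ^ 2) a b).
  { apply (ex_RInt_continuous (V:=R_CompleteNormedModule)). intros; apply cont_of_der. auto_derive. auto. }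
  assert (Edf: ex_RInt (fun x => df x ^ 2) a b).
  { apply (ex_RInt_continuous (V:=R_CompleteNormedModule)). intros; apply cont_of_der. auto_derive. auto. }
  assert (I4 := is_RInt_minus _ _ a b _ _ (RInt_correct _ _ _ Edf)
              (is_RInt_scal _ a b (w ^ 2) _ (RInt_correct _ _ _ Ef))).
  assert (Heq := filterlim_locally_unique _ _ _ I3 I4).
  unfold minus, plus, opp, scal in Heq; simpl in Heq. unfold mult in Heq; simpl in Heq.
  assert (0 <= RInt q a b).
  { apply RInt_ge_0; [lra|exact Eq|]. intros; unfold q. apply pow2_ge_0. }
  change (fun x : R => df x * (df x * 1)) with (fun x : R => df x ^ 2) in Heq.
  change (fun x : R => f x * (f x * 1)) with (fun x : R => f x ^ 2) in Heq.
  change (w * (w * 1)) with (w ^ 2) in Heq. lra.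
Qed.

Lemma le_eps X Y Z : (forall d, 0 < d <= 1 -> X <= Y + d * Z) -> X <= Y.
Proof.
  intros H. destruct (Rle_dec X Y) as [|Hn]; auto. exfalso.
  set (d := Rmin 1 ((X - Y) / (2 * (Rabs Z + 1)))).
  assert (HZ: 0 <= Rabs Z) by apply Rabs_pos.
  assert (Hd1: d <= 1) by apply Rmin_l.
  assert (Hd2: d <= (X - Y) / (2 * (Rabs Z + 1))) by apply Rmin_r.
  assert (Hd0: 0 < d).
  { unfold d. apply Rmin_pos; [lra|]. apply Rdiv_lt_0_compat; lra. }
  specialize (H d (conj Hd0 Hd1)).
  assert (d * Z <= d * Rabs Z) by (apply Rmult_le_compat_l; [lra|apply Rle_abs]).
  assert (d * (2 * (Rabs Z + 1)) <= X - Y).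
  { apply (Rmult_le_compat_r (2 * (Rabs Z + 1))) in Hd2; [|lra].
    unfold Rdiv in Hd2. rewrite Rmult_assoc, Rinv_l in Hd2; lra. }
  nra.
Qed.

Lemma dirichlet (f df : R -> R) a b : a < b ->
  (forall x, is_derive f x (df x)) -> (forall x, ex_derive df x) -> f a = 0 -> f b = 0 ->
  PI ^ 2 * RInt (fun x => f x ^ 2) a b <= (b - a) ^ 2 * RInt (fun x => df x ^ 2) a b.
Proof.
  intros Hab Hf Hdf Ha Hb.
  set (A := RInt (fun x => df x ^ 2) a b). set (B := RInt (fun x => f x ^ 2) a b).
  apply (le_eps _ _ ((4 * (b - a) + 4) * Rabs A)).
  intros d Hd.
  assert (H := dir_delta f df a b d Hab (proj1 Hd) Hf Hdf Ha Hb). fold A B in H.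
  assert (HL: 0 < b - a + 2 * d) by lra.
  assert (H2: PI ^ 2 * B <= (b - a + 2 * d) ^ 2 * A).
  { replace (PI ^ 2 * B) with ((PI / (b - a + 2 * d)) ^ 2 * B * (b - a + 2 * d) ^ 2)
      by (field; lra).
    rewrite Rmult_comm. apply Rmult_le_compat_l; [apply pow2_ge_0|exact H]. }
  assert (E: (b - a + 2 * d) ^ 2 * A = (b - a) ^ 2 * A + d * ((4 * (b - a) + 4 * d) * A)) by ring.
  assert ((4 * (b - a) + 4 * d) * A <= (4 * (b - a) + 4) * Rabs A).
  { apply Rle_trans with ((4 * (b - a) + 4 * d) * Rabs A).
    apply Rmult_le_compat_l; [lra|apply Rle_abs].
    apply Rmult_le_compat_r; [apply Rabs_pos|lra]. }
  nra.
Qed.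

Lemma exR (h : R -> R) a b : (forall x, ex_derive h x) -> ex_RInt h a b.
Proof. intros H. apply (ex_RInt_continuous (V:=R_CompleteNormedModule)).
  intros; apply cont_of_der, H. Qed.

Lemma quad_nonneg A B C : (forall t, 0 <= A + 2 * t * C + t ^ 2 * B) -> C ^ 2 <= A * B.
Proof.
  intros H. assert (HB: 0 <= B).
  { destruct (Rle_dec 0 B); auto. exfalso.
    (* large t *)
    set (t := (Rabs A + 2 * Rabs C + 1) / (- B) + 1).
    specialize (H t). assert (Ht: 1 <= t).
    { unfold t. assert (0 <= (Rabs A + 2 * Rabs C + 1) / - B).
      apply Rdiv_le_0_compat; [pose proof (Rabs_pos A); pose proof (Rabs_pos C); lra|lra]. lra. }
    assert (Hk: t * (- B) >= Rabs A + 2 * Rabs C + 1).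
    { unfold t. rewrite Rmult_plus_distr_r. unfold Rdiv. rewrite Rmult_assoc, Rinv_l by lra.
      lra. }
    pose proof (Rle_abs A). pose proof (Rle_abs C). pose proof (Rabs_pos A). pose proof (Rabs_pos C).
    assert (t ^ 2 * B <= - t * (Rabs A + 2 * Rabs C + 1)) by nra.
    assert (2 * t * C <= 2 * t * Rabs C) by nra.
    assert (A <= t * Rabs A) by nra. nra. }
  destruct (Req_dec B 0) as [H0|H0].
  - subst B. destruct (Req_dec C 0) as [->|HC]; [lra|].
    specialize (H (- (Rabs A + 1) / (2 * C))).
    replace (A + 2 * (- (Rabs A + 1) / (2 * C)) * C + (- (Rabs A + 1) / (2 * C)) ^ 2 * 0)
      with (A - (Rabs A + 1)) in H by (field; auto).
    pose proof (Rle_abs A). lra.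
  - specialize (H (- C / B)).
    replace (A + 2 * (- C / B) * C + (- C / B) ^ 2 * B) with (A - C ^ 2 / B) in H by (field; auto).
    assert (C ^ 2 / B * B = C ^ 2) by (field; auto).
    assert (0 <= (A - C^2/B) * B) by (apply Rmult_le_pos; lra). nra.
Qed.

Lemma cauchy_schwarz (f g : R -> R) a b : a <= b ->
  (forall x, ex_derive f x) -> (forall x, ex_derive g x) ->
  RInt (fun x => f x * g x) a b ^ 2 <=
  RInt (fun x => f x ^ 2) a b * RInt (fun x => g x ^ 2) a b.
Proof.
  intros Hab Hf Hg. apply quad_nonneg. intros t.
  assert (E1: ex_RInt (fun x => f x ^ 2) a b) by (apply exR; intros; auto_derive; auto).
  assert (E2: ex_RInt (fun x => g x ^ 2) a b) by (apply exR; intros; auto_derive; auto).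
  assert (E3: ex_RInt (fun x => f x * g x) a b) by (apply exR; intros; auto_derive; auto).
  assert (I := is_RInt_plus _ _ a b _ _ (RInt_correct _ _ _ E1)
     (is_RInt_plus _ _ a b _ _ (is_RInt_scal _ a b (2 * t) _ (RInt_correct _ _ _ E3))
                               (is_RInt_scal _ a b (t ^ 2) _ (RInt_correct _ _ _ E2)))).
  assert (I': is_RInt (fun x => (f x + t * g x) ^ 2) a b
    (plus (RInt (fun x => f x ^ 2) a b) (plus (scal (2 * t) (RInt (fun x => f x * g x) a b))
        (scal (t ^ 2) (RInt (fun x => g x ^ 2) a b))))).
  { eapply is_RInt_ext; [|exact I]. intros x _. unfold plus, scal; simpl. unfold mult; simpl. ring. }
  assert (U := is_RInt_unique (V:=R_CompleteNormedModule) _ _ _ _ I').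
  assert (U': RInt (fun x => (f x + t * g x) ^ 2) a b = RInt (fun x => f x ^ 2) a b
     + 2 * t * RInt (fun x => f x * g x) a b + t ^ 2 * RInt (fun x => g x ^ 2) a b).
  { rewrite U. unfold plus, scal; simpl; unfold mult; simpl; ring. }
  assert (G: 0 <= RInt (fun x => (f x + t * g x) ^ 2) a b).
  { apply RInt_ge_0; auto. apply exR; intros; auto_derive; auto.
    intros; apply pow2_ge_0. }
  rewrite U' in G. lra.
Qed.

Lemma bp_exd m x : ex_derive (bp m) x.
Proof.
  destruct m. apply (ex_derive_ext (fun _ => 1)). intros; rewrite bp_0; auto. auto_derive; auto.
  eexists; apply bp_derive.
Qed.


Ltac rr := match goal with |- ?A = ?B => change (@eq R A B) end.

Ltac exd := repeat first [ split | apply bp_exd | exact I ].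

Lemma ftc (h dh : R -> R) a b : (forall x, is_derive h x (dh x)) -> (forall x, ex_derive dh x) ->
  @eq R (RInt dh a b) (h b - h a).
Proof.
  intros H1 H2. apply (is_RInt_unique (V:=R_CompleteNormedModule)).
  apply (is_RInt_derive h dh a b). intros; apply H1. intros; apply cont_of_der, H2.
Qed.

Lemma RInt_lin (f1 f2 : R -> R) c1 c2 a b : ex_RInt f1 a b -> ex_RInt f2 a b ->
  @eq R (RInt (fun x => c1 * f1 x + c2 * f2 x) a b) (c1 * RInt f1 a b + c2 * RInt f2 a b).
Proof.
  intros E1 E2.
  assert (I := is_RInt_plus _ _ a b _ _ (is_RInt_scal _ a b c1 _ (RInt_correct _ _ _ E1))
                                       (is_RInt_scal _ a b c2 _ (RInt_correct _ _ _ E2))).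
  assert (U := is_RInt_unique (V:=R_CompleteNormedModule) _ _ _ _ I).
  exact U.
Qed.

Lemma RInt_sc (f1 : R -> R) c a b : ex_RInt f1 a b ->
  @eq R (RInt (fun x => c * f1 x) a b) (c * RInt f1 a b).
Proof. intros E. exact (RInt_scal f1 a b c E). Qed.

Definition X m : R := RInt (fun x => bp m x ^ 2) 0 1.

Lemma X_nonneg m : 0 <= X m.
Proof. unfold X. apply RInt_ge_0. lra. apply exR; intros; auto_derive; exd.
  intros; apply pow2_ge_0. Qed.

Lemma bp_1 x : bp 1 x = x - 1/2.
Proof. unfold bp. simpl. unfold C. simpl. rewrite bern0, bern1. field. Qed.

Lemma X1 : X 1 = 1/12.
Proof.
  unfold X. rewrite (RInt_ext _ (fun x => (x - 1/2) ^ 2)) by (intros; rewrite bp_1; auto).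
  rewrite (ftc (fun x => (x - 1/2) ^ 3 / 3)).
  field. intros; auto_derive; auto; rr; field. intros; auto_derive; auto.
Qed.

Lemma int_bp m : @eq R (RInt (bp (S m)) 0 1) 0.
Proof.
  assert (H: @eq R (RInt (fun x => INR (S (S m)) * bp (S m) x) 0 1) 0).
  { rewrite (ftc (bp (S (S m)))). rewrite bp_at1, bp_at0. ring.
    intros; apply bp_derive. intros; auto_derive; exd. }
  rewrite RInt_sc in H.
  assert (INR (S (S m)) > 0) by (apply lt_0_INR; lia). nra.
  apply exR, bp_exd.
Qed.

Lemma ibp_odd k : bp (S (S k)) 0 = 0 -> bp (S (S k)) 1 = 0 ->
  @eq R (INR (S k) * RInt (fun x => bp k x * bp (S (S k)) x) 0 1 +
  INR (S (S k)) * RInt (fun x => bp (S k) x ^ 2) 0 1) 0.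
Proof.
  intros H0 H1.
  rewrite <- RInt_lin.
  rewrite (ftc (fun x => bp (S k) x * bp (S (S k)) x)). rewrite H0, H1. ring.
  intros x. eapply is_derive_eq.
  apply (is_derive_mult (bp (S k)) (bp (S (S k)))). apply bp_derive. apply bp_derive.
  intros; apply Rmult_comm. unfold plus, mult; simpl. ring.
  intros; auto_derive; exd.
  apply exR; intros; auto_derive; exd. apply exR; intros; auto_derive; exd.
Qed.

Lemma ibp_B j : @eq R (bernoulli (S (S j))) (INR (S (S j)) * RInt (fun x => bp 1 x * bp (S j) x) 0 1).
Proof.
  assert (H: @eq R (RInt (fun x => 1 * bp (S (S j)) x + INR (S (S j)) * (bp 1 x * bp (S j) x)) 0 1)
     (bernoulli (S (S j)))).
  { rewrite (ftc (fun x => bp 1 x * bp (S (S j)) x)).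
    rewrite bp_at1, !bp_at0, bern1, bp_1. field.
    intros x. eapply is_derive_eq.
    apply (is_derive_mult (bp 1) (bp (S (S j)))). apply bp_derive. apply bp_derive.
    intros; apply Rmult_comm. unfold plus, mult; simpl. rewrite bp_0. simpl. ring.
    intros; auto_derive; exd. }
  rewrite RInt_lin in H. rewrite int_bp in H. lra.
  apply exR, bp_exd. apply exR; intros; auto_derive; exd.
Qed.

Lemma chasles (f : R -> R) : (forall x, ex_derive f x) ->
  @eq R (RInt f 0 (1/2) + RInt f (1/2) 1) (RInt f 0 1).
Proof. intros H. exact (RInt_Chasles f 0 (1/2) 1 (exR f _ _ H) (exR f _ _ H)). Qed.

Lemma exd_sq (f : R -> R) : (forall x, ex_derive f x) -> forall x, ex_derive (fun y => f y ^ 2) x.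
Proof. intros H x. apply (ex_derive_pow f 2 x (H x)). Qed.

Lemma X_step q :
  16 * PI ^ 4 * X (2 * q + 3) <= INR (2 * q + 3) ^ 2 * INR (2 * q + 2) ^ 2 * X (2 * q + 1).
Proof.
  set (k := (2 * q + 1)%nat).
  replace (2 * q + 3)%nat with (S (S k)) by (unfold k; lia).
  replace (2 * q + 2)%nat with (S k) by (unfold k; lia).
  set (m := S (S k)).
  assert (H0: bp m 0 = 0).
  { unfold m. rewrite bp_at0. replace (S (S k)) with (2 * q + 3)%nat by (unfold k; lia).
    apply bern_odd. }
  assert (H1: bp m 1 = 0).
  { unfold m. rewrite bp_at1. replace (S (S k)) with (2 * q + 3)%nat by (unfold k; lia).
    apply bern_odd. }
  assert (Hh: bp m (1/2) = 0).
  { unfold m. replace (S (S k)) with (2 * (q + 1) + 1)%nat by (unfold k; lia). apply bp_half. }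
  set (df := fun x => INR m * bp (S k) x).
  assert (Hd: forall x, is_derive (bp m) x (df x)) by (intros; apply bp_derive).
  assert (Hdd: forall x, ex_derive df x) by (intros; unfold df; auto_derive; exd).
  assert (D1 := dirichlet (bp m) df 0 (1/2) ltac:(lra) Hd Hdd H0 Hh).
  assert (D2 := dirichlet (bp m) df (1/2) 1 ltac:(lra) Hd Hdd Hh H1).
  assert (C1 := chasles (fun x => bp m x ^ 2) (exd_sq _ (bp_exd m))).
  assert (C2 := chasles (fun x => df x ^ 2) (exd_sq _ Hdd)).
  assert (E: @eq R (RInt (fun x => df x ^ 2) 0 1) (INR m ^ 2 * X (S k))).
  { unfold X. transitivity (RInt (fun x => INR m ^ 2 * bp (S k) x ^ 2) 0 1).
    apply RInt_ext. intros x _. unfold df. clearbody m. rr. ring.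
    apply RInt_sc. apply exR, exd_sq, bp_exd. }
  assert (A: 4 * PI ^ 2 * X m <= INR m ^ 2 * X (S k)).
  { rewrite <- E. unfold X. rewrite <- C1, <- C2.
    replace ((1/2 - 0) ^ 2) with (/4) in D1 by field.
    replace ((1 - 1/2) ^ 2) with (/4) in D2 by field.
    revert D1 D2. generalize (RInt (fun x => bp m x ^ 2) 0 (1/2)) (RInt (fun x => bp m x ^ 2) (1/2) 1)
      (RInt (fun x => df x ^ 2) 0 (1/2)) (RInt (fun x => df x ^ 2) (1/2) 1).
    intros a1 a2 b1 b2 D1 D2. lra. }
  pose (Z := RInt (fun x => bp k x * bp m x) 0 1).
  assert (Hi: INR (S k) * Z + INR m * X (S k) = 0) by exact (ibp_odd k H0 H1).
  assert (CS: Z ^ 2 <= X k * X m).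
  { apply cauchy_schwarz. lra. apply bp_exd. apply bp_exd. }
  assert (HXm := X_nonneg m). assert (HXk := X_nonneg k).
  assert (Hm: 0 < INR m) by (apply lt_0_INR; unfold m; lia).
  assert (Hk: 0 < INR (S k)) by (apply lt_0_INR; lia).
  assert (A2: 4 * PI ^ 2 * X m <= - INR m * INR (S k) * Z).
  { replace (- INR m * INR (S k) * Z) with (INR m * (- (INR (S k) * Z))) by ring.
    replace (- (INR (S k) * Z)) with (INR m * X (S k)) by lra. lra. }
  assert (Hp: 0 <= 4 * PI ^ 2 * X m) by (pose proof PI_RGT_0; apply Rmult_le_pos; [nra|auto]).
  assert (Sq: (4 * PI ^ 2 * X m) ^ 2 <= INR m ^ 2 * INR (S k) ^ 2 * (X k * X m)).
  { apply Rle_trans with ((- INR m * INR (S k) * Z) ^ 2).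
    apply pow_incr; auto.
    replace ((- INR m * INR (S k) * Z) ^ 2) with (INR m ^ 2 * INR (S k) ^ 2 * Z ^ 2) by ring.
    apply Rmult_le_compat_l; [nra|auto]. }
  destruct (Req_dec (X m) 0) as [Z0|Z0].
  - rewrite Z0. assert (0 <= INR m ^ 2 * INR (S k) ^ 2 * X k) by (apply Rmult_le_pos; nra). lra.
  - assert (0 < X m) by lra.
    apply (Rmult_le_reg_r (X m)); auto.
    replace (16 * PI ^ 4 * X m * X m) with ((4 * PI ^ 2 * X m) ^ 2) by ring.
    replace (INR m ^ 2 * INR (S k) ^ 2 * X k * X m) with (INR m ^ 2 * INR (S k) ^ 2 * (X k * X m)) by ring.
    exact Sq.
Qed.

Lemma PI_le : PI <= 3.24.
Proof.
  destruct (PI_ineq 5) as [_ H]. unfold tg_alt, PI_tg in H. simpl in H.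
  lra.
Qed.

Lemma fact_le n m : (m <= n)%nat -> (Factorial.fact n <= n ^ m * Factorial.fact (n - m))%nat.
Proof.
  induction m; intros H.
  - simpl. rewrite Nat.sub_0_r. lia.
  - assert (IH := IHm ltac:(lia)).
    replace (n - m)%nat with (S (n - S m)) in IH by lia.
    rewrite fact_simpl in IH. simpl Nat.pow.
    assert (S (n - S m) <= n)%nat by lia.
    assert (S (n - S m) * Factorial.fact (n - S m) <= n * Factorial.fact (n - S m))%nat
      by (apply Nat.mul_le_mono_r; lia).
    nia.
Qed.

Lemma C_fact_le n m : (m <= n)%nat -> C n m * INR (Factorial.fact m) <= INR n ^ m.
Proof.
  intros H. unfold C.
  assert (H1 := fact_le n m H).
  apply le_INR in H1. rewrite mult_INR, pow_INR in H1.
  assert (0 < INR (Factorial.fact (n - m))) by (apply lt_0_INR, Factorial.lt_O_fact).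
  assert (0 < INR (Factorial.fact m)) by (apply lt_0_INR, Factorial.lt_O_fact).
  replace (INR (Factorial.fact n) / (INR (Factorial.fact m) * INR (Factorial.fact (n - m))) *
    INR (Factorial.fact m)) with (INR (Factorial.fact n) / INR (Factorial.fact (n - m))) by (field; lra).
  apply Rmult_le_reg_r with (INR (Factorial.fact (n - m))); auto.
  unfold Rdiv. rewrite Rmult_assoc, Rinv_l by lra. lra.
Qed.

Lemma C_nonneg n m : 0 <= C n m.
Proof. unfold C. apply Rmult_le_pos. apply pos_INR. apply Rlt_le, Rinv_0_lt_compat.
  apply Rmult_lt_0_compat; apply lt_0_INR, Factorial.lt_O_fact. Qed.

Lemma X_odd_bound q : X (2 * q + 1) * (2 * PI) ^ (4 * q) * 12 <= INR (Factorial.fact (2 * q + 1)) ^ 2.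
Proof.
  induction q.
  - simpl. rewrite X1. simpl. lra.
  - assert (Hs := X_step q).
    replace (2 * S q + 1)%nat with (2 * q + 3)%nat by lia.
    replace (4 * S q)%nat with (4 * q + 4)%nat by lia.
    replace (2 * q + 3)%nat with (S (S (2 * q + 1))) at 2 by lia.
    rewrite !fact_simpl, !mult_INR.
    replace (INR (S (S (2 * q + 1)))) with (INR (2 * q + 3)) by (f_equal; lia).
    replace (INR (S (2 * q + 1))) with (INR (2 * q + 2)) by (f_equal; lia).
    rewrite pow_add.
    assert (H16: (2 * PI) ^ 4 = 16 * PI ^ 4) by ring. rewrite H16.
    assert (0 <= (2 * PI) ^ (4 * q)) by (apply pow_le; pose proof PI_RGT_0; lra).
    assert (0 <= INR (2 * q + 3) ^ 2 * INR (2 * q + 2) ^ 2) by (apply Rmult_le_pos; apply pow2_ge_0).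
    apply Rle_trans with (INR (2 * q + 3) ^ 2 * INR (2 * q + 2) ^ 2 * (X (2 * q + 1) * (2 * PI) ^ (4 * q) * 12)).
    + replace (X (2 * q + 3) * ((2 * PI) ^ (4 * q) * (16 * PI ^ 4)) * 12) with
        ((16 * PI ^ 4 * X (2 * q + 3)) * ((2 * PI) ^ (4 * q) * 12)) by ring.
      replace (INR (2 * q + 3) ^ 2 * INR (2 * q + 2) ^ 2 * (X (2 * q + 1) * (2 * PI) ^ (4 * q) * 12))
        with ((INR (2 * q + 3) ^ 2 * INR (2 * q + 2) ^ 2 * X (2 * q + 1)) * ((2 * PI) ^ (4 * q) * 12)) by ring.
      apply Rmult_le_compat_r; [lra|exact Hs].
    + replace ((INR (2 * q + 3) * (INR (2 * q + 2) * INR (Factorial.fact (2 * q + 1)))) ^ 2)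
        with (INR (2 * q + 3) ^ 2 * INR (2 * q + 2) ^ 2 * INR (Factorial.fact (2 * q + 1)) ^ 2) by ring.
      apply Rmult_le_compat_l; auto.
Qed.

Lemma B_bound j : Rabs (bernoulli (2 * j + 2)) * (2 * PI) ^ (2 * j) * 12 <= INR (Factorial.fact (2 * j + 2)).
Proof.
  assert (H := ibp_B (2 * j)).
  replace (S (S (2 * j))) with (2 * j + 2)%nat in H by lia.
  replace (S (2 * j)) with (2 * j + 1)%nat in H by lia.
  set (Z := RInt (fun x => bp 1 x * bp (2 * j + 1) x) 0 1) in H.
  assert (CS: Z ^ 2 <= X 1 * X (2 * j + 1)) by (apply cauchy_schwarz; [lra|apply bp_exd|apply bp_exd]).
  rewrite X1 in CS.
  assert (Hx := X_odd_bound j).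
  assert (HP: 0 <= (2 * PI) ^ (2 * j)) by (apply pow_le; pose proof PI_RGT_0; lra).
  assert (E4: (2 * PI) ^ (4 * j) = ((2 * PI) ^ (2 * j)) ^ 2) by (rewrite <- pow_mult; f_equal; lia).
  rewrite E4 in Hx.
  set (P := (2 * PI) ^ (2 * j)) in *.
  set (F := INR (Factorial.fact (2 * j + 1))) in *.
  assert (EF: INR (Factorial.fact (2 * j + 2)) = INR (2 * j + 2) * F).
  { unfold F. replace (2 * j + 2)%nat with (S (2 * j + 1)) at 1 by lia.
    rewrite fact_simpl, mult_INR. f_equal. f_equal. lia. }
  rewrite EF.
  set (M := INR (2 * j + 2)) in *.
  assert (HM: 0 <= M) by apply pos_INR.
  assert (HF: 0 <= F) by apply pos_INR.
  assert (HXn := X_nonneg (2 * j + 1)).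
  assert (Sq: (Rabs (bernoulli (2 * j + 2)) * P * 12) ^ 2 <= (M * F) ^ 2).
  { rewrite H. rewrite Rabs_mult, Rabs_pos_eq by auto.
    replace ((M * Rabs Z * P * 12) ^ 2) with (M ^ 2 * (144 * (Z ^ 2 * P ^ 2))) by
      (rewrite <- (pow2_abs Z); ring).
    replace ((M * F) ^ 2) with (M ^ 2 * F ^ 2) by ring.
    apply Rmult_le_compat_l; [apply pow2_ge_0|].
    apply Rle_trans with (144 * (1 / 12 * X (2 * j + 1) * P ^ 2)).
    apply Rmult_le_compat_l; [lra|]. apply Rmult_le_compat_r; [apply pow2_ge_0|exact CS].
    lra. }
  assert (0 <= Rabs (bernoulli (2 * j + 2)) * P * 12).
  { apply Rmult_le_pos; [|lra]. apply Rmult_le_pos; auto. apply Rabs_pos. }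
  assert (0 <= M * F) by (apply Rmult_le_pos; auto).
  nra.
Qed.

Lemma C_n1 n : (1 <= n)%nat -> C n 1 = INR n.
Proof.
  intros Hn. destruct n; [lia|].
  unfold C. replace (S n - 1)%nat with n by lia. rewrite fact_simpl, mult_INR. simpl (Factorial.fact 1).
  change (INR 1) with 1. rewrite Rmult_1_l. unfold Rdiv. rewrite Rmult_assoc, Rinv_r by apply INR_fact_neq_0. ring.
Qed.

Theorem mainTheorem4 (n k : nat) (hn : (1 <= n)%nat) (hk : (k < n)%nat) :
  Rabs (C n (k + 1) * genocchi (k + 1)) <= 7 * (INR n / PI) ^ (k + 1).
Proof.
  assert (HPI := PI_RGT_0). assert (HPI2 := PI_le).
  assert (Hn: 1 <= INR n) by (apply (le_INR 1); auto).
  assert (Hq: 0 <= INR n / PI) by (apply Rdiv_le_0_compat; lra).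
  destruct (Nat.Even_or_Odd k) as [[j Hj]|[j Hj]].
  - subst k. destruct j as [|i].
    + simpl. unfold genocchi. rewrite C_n1, bern1 by auto. simpl.
      replace (INR n * (2 * (1 - 2 * 1) * (-1 / 2))) with (INR n) by field.
      rewrite Rabs_pos_eq by lra. rewrite Rmult_1_r.
      apply Rmult_le_reg_r with PI; auto. unfold Rdiv. rewrite Rmult_assoc, (Rmult_assoc (INR n)), Rinv_l by lra. nra.
    + unfold genocchi. replace (2 * S i + 1)%nat with (2 * i + 3)%nat by lia.
      rewrite bern_odd, !Rmult_0_r, Rabs_R0.
      apply Rmult_le_pos; [lra|]. apply pow_le; auto.
  - subst k. replace (2 * j + 1 + 1)%nat with (2 * j + 2)%nat by lia.
    set (m := (2 * j + 2)%nat).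
    assert (hb := B_bound j). fold m in hb.
    set (B := bernoulli m) in *. unfold genocchi. fold m B.
    set (T := 2 ^ (2 * j)). set (Q := PI ^ (2 * j)). set (N := INR n ^ m).
    set (F := INR (Factorial.fact m)) in *.
    assert (HT: 1 <= T) by (apply pow_R1_Rle; lra).
    assert (HQ: 0 < Q) by (apply pow_lt; lra).
    assert (EP: (2 * PI) ^ (2 * j) = T * Q) by (unfold T, Q; apply Rpow_mult_distr).
    rewrite EP in hb.
    assert (E2: 2 ^ m = 4 * T) by (unfold m, T; rewrite pow_add; simpl; ring).
    assert (EPm: PI ^ m = Q * PI ^ 2) by (unfold m, Q; apply pow_add).
    assert (h2: C n m * F <= N) by (apply C_fact_le; unfold m; lia).
    assert (HC := C_nonneg n m).
    assert (HB := Rabs_pos B).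
    assert (L1: Rabs (C n m * (2 * (1 - 2 ^ m) * B)) <= 8 * T * C n m * Rabs B).
    { rewrite E2. rewrite !Rabs_mult, (Rabs_pos_eq (C n m)) by auto.
      rewrite Rabs_pos_eq by lra. rewrite (Rabs_left1 (1 - 4 * T)) by lra.
      assert (0 <= C n m * Rabs B) by (apply Rmult_le_pos; auto). nra. }
    assert (L2: 8 * T * C n m * Rabs B * Q * 12 <= 8 * N).
    { apply Rle_trans with (8 * C n m * F); [|lra].
      replace (8 * T * C n m * Rabs B * Q * 12) with (8 * C n m * (Rabs B * (T * Q) * 12)) by ring.
      apply Rmult_le_compat_l; [lra|exact hb]. }
    assert (EQ: (INR n / PI) ^ m = N / (Q * PI ^ 2)).
    { unfold N. rewrite <- EPm. unfold Rdiv. rewrite Rpow_mult_distr, pow_inv. reflexivity. }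
    rewrite EQ.
    assert (HN: 0 <= N) by (apply pow_le; lra).
    apply Rle_trans with (8 * T * C n m * Rabs B); auto.
    assert (HQP: 0 < Q * PI ^ 2) by (apply Rmult_lt_0_compat; [auto|apply pow_lt; lra]).
    apply Rmult_le_reg_r with (Q * PI ^ 2). exact HQP.
    replace (7 * (N / (Q * PI ^ 2)) * (Q * PI ^ 2)) with (7 * N) by (field; split; lra).
    assert (PI ^ 2 <= 10.5) by (simpl; nra).
    assert (0 <= 8 * T * C n m * Rabs B * Q) by (apply Rmult_le_pos; [|lra]; apply Rmult_le_pos; auto; apply Rmult_le_pos; [lra|auto]).
    nra.
Qed.
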